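(* Let $n\ge 2$. If $M\in\mathcal{S}_n$ is a minimiser of $\lambda_{n-1}$ over $\mathcal{S}_n$, then the matrix obtained from $M$ by setting all of its diagonal entries to $0$ is also a minimiser of $\lambda_{n-1}$ over $\mathcal{S}_n$.
   Context: $\mathcal{S}_n$ is the set of $n\times n$ real symmetric matrices with all entries in $[0,1]$; $\lambda_k(M)$ is the $k$-th largest eigenvalue of $M$ counted with multiplicity. A minimiser of $\lambda_{n-1}$ over $\mathcal{S}_n$ is $M\in\mathcal{S}_n$ with $\lambda_{n-1}(M)\le\lambda_{n-1}(M')$ for all $M'\in\mathcal{S}_n$. *)

(* Defs.v *)
From HB Require Import structures.
From mathcomp Require Import all_boot all_order all_algebra.
From mathcomp Require Import boolp classical_sets reals.
Set Implicit Arguments. Unset Strict Implicit. Unset Printing Implicit Defensive.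
Import Order.TTheory GRing.Theory Num.Theory.
Local Open Scope ring_scope.

Definition in_Sn (R : realType) (n : nat) (M : 'M[R]_n) : Prop :=
  (forall i j, M i j = M j i) /\ (forall i j, 0 <= M i j <= 1).

(* For real symmetric
   matrices such a sequence exists (the characteristic polynomial splits
   over R); otherwise the default [::] is returned (never used here). *)
Definition eigen_seq (R : realType) (n : nat) (M : 'M[R]_n) : seq R :=
  xget [::] (fun s : seq R =>
    sorted (fun x y : R => y <= x) s /\ char_poly M = \prod_(x <- s) ('X - x%:P)).

(* lambda_k(M): the k-th largest eigenvalue (k is 1-indexed). *)
Definition lambdak (R : realType) (n : nat) (k : nat) (M : 'M[R]_n) : R :=
  nth 0 (eigen_seq M) k.-1.

Definition is_minimiser (R : realType) (n : nat) (M : 'M[R]_n) : Prop :=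
  in_Sn M /\ forall M' : 'M[R]_n, in_Sn M' -> lambdak (n.-1) M <= lambdak (n.-1) M'.

Definition zero_diag (R : realType) (n : nat) (M : 'M[R]_n) : 'M[R]_n :=
  \matrix_(i, j) (if i == j then 0 else M i j).

(* Main.v *)
Require Import Defs.
From mathcomp Require Import all_boot all_order all_algebra.
From mathcomp Require Import boolp classical_sets reals.
From mathcomp Require Import complex zify.
Set Implicit Arguments. Unset Strict Implicit. Unset Printing Implicit Defensive.
Import Order.TTheory GRing.Theory Num.Theory.
Local Open Scope ring_scope.

Lemma nth_count_ge (R : realType) (s : seq R) (t : R) (k : nat) :
  sorted (fun x y : R => y <= x) s -> (k < count (fun x => (t <= x)%R) s)%N ->
  t <= nth 0 s k.
Proof.
move=> ss hc; rewrite leNgt; apply/negP => hlt.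
have hk : (k < size s)%N by apply: (leq_trans hc); apply: count_size.
have H0 : count (fun x => t <= x) (drop k s) = 0%N.
  apply/eqP; rewrite -leqn0 leqNgt -has_count; apply/negP; case/(has_nthP (0:R)) => i.
  rewrite size_drop => hi; rewrite nth_drop /= leNgt; apply/negP/negPn.
  have hle : nth 0 s (k + i) <= nth 0 s k.
    apply: (sorted_leq_nth (leT := fun x y : R => y <= x));
      rewrite ?inE /= ?leq_addr -?ltn_subRL //.
    by move=> x y z /= h1 h2; apply: le_trans h2 h1.
  exact: le_lt_trans hle hlt.
move: hc; rewrite -(cat_take_drop k s) count_cat H0 addn0.
rewrite ltnNge; move/negP; apply; apply: leq_trans (count_size _ _) _.
by rewrite size_take hk.
Qed.

Lemma eigen_seq_spec (R : realType) (n : nat) (A : 'M[R]_n) (r : 'I_n -> R) :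
  char_poly A = \prod_(j < n) ('X - (r j)%:P) ->
  sorted (fun x y : R => y <= x) (eigen_seq A) /\
  perm_eq (eigen_seq A) (map r (enum 'I_n)).
Proof.
move=> hA.
have hp : char_poly A = \prod_(x <- map r (enum 'I_n)) ('X - x%:P).
  by rewrite big_map big_enum.
have ex : exists s : seq R, sorted (fun x y : R => y <= x) s /\
    char_poly A = \prod_(x <- s) ('X - x%:P).
  exists (sort (fun x y : R => y <= x) (map r (enum 'I_n))); split.
    by apply: sort_sorted => x y; exact: le_total.
  by rewrite hp; apply: perm_big; rewrite perm_sym perm_sort.
have [h1 h2] := xgetPex [::] ex.
rewrite /eigen_seq; split => //.
by apply: prod_XsubC_eq; rewrite -h2 -hp.
Qed.

Lemma char_poly_similar (F : fieldType) (n : nat) (P D : 'M[F]_n) :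
  P \in unitmx -> char_poly (invmx P *m D *m P) = char_poly D.
Proof.
move=> Pu.
set Q := map_mx polyC (invmx P); set Pp := map_mx polyC P.
have QP : Q *m Pp = 1%:M by rewrite -map_mxM mulVmx // map_mx1.
have e : char_poly_mx (invmx P *m D *m P) = Q *m char_poly_mx D *m Pp.
  rewrite /char_poly_mx !map_mxM -/Q -/Pp mulmxBr mulmxBl.
  have -> : Q *m 'X%:M *m Pp = 'X%:M by rewrite scalar_mxC -mulmxA QP mulmx1.
  by [].
by rewrite /char_poly e !det_mulmx mulrAC -det_mulmx QP det1 mul1r.
Qed.

Section Cx.
Variable R : realType.
Local Notation C := (R[i]).
Local Notation toC := (real_complex R).
Local Open Scope sesquilinear_scope.

Definition cmx n (A : 'M[R]_n) : 'M[C]_n := map_mx toC A.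

Lemma toC_real (x : R) : toC x \is Num.real.
Proof. rewrite realE !lecE /= eqxx /=; exact: le_total. Qed.

Lemma realC_eq (z : C) : z \is Num.real -> z = toC (complex.Re z).
Proof.
case: z => a b; rewrite realE !lecE /= => /orP [] /andP [/eqP h _].
  by rewrite h.
by rewrite -h.
Qed.

Lemma spec_real n (A : 'M[R]_n) : A^T = A ->
  exists (P : 'M[C]_n) (r : 'I_n -> R), [/\ P \is unitarymx,
    cmx A = P^t* *m diag_mx (\row_j toC (r j)) *m P &
    char_poly A = \prod_(j < n) ('X - (r j)%:P)].
Proof.
move=> Asym.
have herm : cmx A \is hermsymmx.
  apply: realsym_hermsym.
    apply/is_hermitianmxP; rewrite expr0 scale1r map_mx_id // /cmx.
    by rewrite map_trmx Asym.
  by apply/mxOverP => i j; rewrite mxE; exact: toC_real.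
have hA := orthomx_spectralP (hermitian_normalmx herm).
have dreal := hermitian_spectral_diag_real herm.
set P := spectralmx (cmx A) in hA; set d := spectral_diag (cmx A) in hA dreal.
have Pu : P \is unitarymx by apply: spectral_unitarymx.
exists P, (fun j => complex.Re (d 0 j)).
have dE : d = \row_j toC (complex.Re (d 0 j)).
  apply/rowP => j; rewrite mxE; apply: realC_eq.
  by move/mxOverP: dreal; apply.
split => //.
  by rewrite -invmx_unitary // -dE.
apply: (map_poly_inj toC).
rewrite map_char_poly -/(cmx A) hA char_poly_similar ?unitarymx_unit //.
rewrite char_poly_trig ?diag_mx_is_trig // rmorph_prod.
apply: eq_bigr => j _; rewrite mxE eqxx mulr1n.
rewrite rmorphB /= map_polyX map_polyC /=.
by rewrite {1}dE mxE.
Qed.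

Lemma qf_diag n (P : 'M[C]_n) (r : 'I_n -> R) (c : 'rV[C]_n) :
  P \is unitarymx ->
  ((c *m P) *m (P^t* *m diag_mx (\row_j toC (r j)) *m P) *m (c *m P)^t*) 0 0 =
  \sum_j toC (r j) * (c 0 j * (c 0 j)^*).
Proof.
move=> Pu.
rewrite trmx_mul map_mxM !mulmxA -(mulmxA c P) (unitarymxP Pu) mulmx1.
rewrite -!mulmxA (mulmxA P) (unitarymxP Pu) mul1mx mulmxA mul_mx_diag mxE.
by apply: eq_bigr => j _; rewrite !mxE mulrCA mulrA.
Qed.

Lemma qf_norm n (P : 'M[C]_n) (c : 'rV[C]_n) :
  P \is unitarymx ->
  ((c *m P) *m (c *m P)^t*) 0 0 = \sum_j (c 0 j * (c 0 j)^*).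
Proof.
move=> Pu.
rewrite trmx_mul map_mxM !mulmxA -(mulmxA c P) (unitarymxP Pu) mulmx1 mxE.
by apply: eq_bigr => j _; rewrite !mxE.
Qed.

Definition sel n (S : {set 'I_n}) : 'M[C]_(#|S|, n) :=
  \matrix_(k, j) ((enum_val k == j)%:R).

Lemma sel_free n (S : {set 'I_n}) : row_free (sel S).
Proof.
apply: inj_row_free => v hv; apply/rowP => k.
have := congr1 (fun M : 'M[C]_(1, n) => M 0 (enum_val k)) hv.
rewrite !mxE (bigD1 k) //= mxE eqxx mulr1 big1 ?addr0 // => l lk.
by rewrite mxE (inj_eq enum_val_inj) (negbTE lk) mulr0.
Qed.

Lemma sel_supp n (S : {set 'I_n}) (w : 'rV[C]_#|S|) j :
  j \notin S -> (w *m sel S) 0 j = 0.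
Proof.
move=> jS; rewrite mxE big1 // => l _; rewrite mxE.
case: eqP => [e|]; last by rewrite mulr0.
by move: (enum_valP l); rewrite e (negbTE jS).
Qed.

Lemma count_mono n (PA PB : 'M[C]_n) (rA rB : 'I_n -> R) :
  PA \is unitarymx -> PB \is unitarymx ->
  (forall x : 'rV[C]_n,
     (x *m (PA^t* *m diag_mx (\row_j toC (rA j)) *m PA) *m x^t*) 0 0 <=
     (x *m (PB^t* *m diag_mx (\row_j toC (rB j)) *m PB) *m x^t*) 0 0) ->
  forall t : R, (#|[set j | (t <= rA j)%R]| <= #|[set j | (t <= rB j)%R]|)%N.
Proof.
move=> PAu PBu hq t.
set IA := [set j | t <= rA j]; set JB := [set j | t <= rB j].
set KB := [set j | rB j < t].
have cK : (#|JB| + #|KB| = n)%N.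
  have -> : KB = ~: JB by apply/setP => j; rewrite !inE ltNge.
  by rewrite cardsC card_ord.
rewrite leqNgt; apply/negP => hlt.
set U1 := sel IA *m PA; set U2 := sel KB *m PB.
have r1 : \rank U1 = #|IA|.
  by rewrite mxrankMfree ?row_free_unit ?unitarymx_unit //; apply/eqP; exact: sel_free.
have r2 : \rank U2 = #|KB|.
  by rewrite mxrankMfree ?row_free_unit ?unitarymx_unit //; apply/eqP; exact: sel_free.
have hs := mxrank_sum_cap U1 U2; rewrite r1 r2 in hs.
have hc : (U1 :&: U2)%MS != 0.
  rewrite -mxrank_eq0; have := rank_leq_col (U1 + U2)%MS.
  apply/contraTneq => h0; rewrite h0 addn0 in hs; rewrite hs; lia.
case/rowV0Pn: hc => x hx xnz.
have /submxP [w1 e1] : (x <= U1)%MS := submx_trans hx (capmxSl _ _).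
have /submxP [w2 e2] : (x <= U2)%MS := submx_trans hx (capmxSr _ _).
set c1 := w1 *m sel IA; set c2 := w2 *m sel KB.
have x1 : x = c1 *m PA by rewrite e1 /U1 mulmxA.
have x2 : x = c2 *m PB by rewrite e2 /U2 mulmxA.
have qA := qf_diag rA c1 PAu; have qB := qf_diag rB c2 PBu.
have N1 := qf_norm c1 PAu; have N2 := qf_norm c2 PBu.
rewrite -x1 in qA N1; rewrite -x2 in qB N2.
have := hq x; rewrite qA qB => hAB.
have hA : toC t * (x *m x^t*) 0 0 <= \sum_j toC (rA j) * (c1 0 j * (c1 0 j)^*).
  rewrite N1 mulr_sumr; apply: ler_sum => j _.
  case: (boolP (j \in IA)) => jI.
    by apply: ler_wpM2r; [exact: mul_conjC_ge0 | rewrite lecR; move: jI; rewrite inE].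
  by rewrite /c1 sel_supp // !mul0r !mulr0.
have hB : \sum_j toC (rB j) * (c2 0 j * (c2 0 j)^*) < toC t * (x *m x^t*) 0 0.
  rewrite N2 mulr_sumr -subr_gt0 -sumrB lt_def psumr_neq0; last first.
    move=> j _; rewrite -mulrBl.
    case: (boolP (j \in KB)) => jK.
      apply: mulr_ge0; last exact: mul_conjC_ge0.
      by rewrite subr_ge0 lecR; apply: ltW; move: jK; rewrite inE.
    by rewrite /c2 sel_supp // !mul0r !mulr0.
  apply/andP; split; last first.
    apply: sumr_ge0 => j _; rewrite -mulrBl.
    case: (boolP (j \in KB)) => jK.
      apply: mulr_ge0; last exact: mul_conjC_ge0.
      by rewrite subr_ge0 lecR; apply: ltW; move: jK; rewrite inE.
    by rewrite /c2 sel_supp // !mul0r !mulr0.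
  have c2nz : c2 != 0 by apply: contraNneq xnz => h; rewrite x2 h mul0mx.
  case/rV0Pn: c2nz => j hj.
  have jK : j \in KB by apply: contraR hj => jK; rewrite /c2 sel_supp.
  apply/hasP; exists j; first by rewrite mem_index_enum.
  rewrite /= -mulrBl mulr_gt0 // ?mul_conjC_gt0 //.
  by rewrite subr_gt0 ltcR; move: jK; rewrite inE.
have := le_lt_trans (le_trans hA hAB) hB.
by rewrite ltxx.
Qed.
End Cx.

Lemma card_count n (P : pred 'I_n) : #|[set j | P j]| = count P (enum 'I_n).
Proof.
rewrite cardsE cardE /enum_mem size_filter.
rewrite /enum_mem count_filter. apply: eq_count => x. by rewrite /= andbT.
Qed.

Lemma count_nth_ge (R : realType) (s : seq R) (i : nat) :
  sorted (fun x y : R => y <= x) s -> (i < size s)%N ->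
  (i < count (fun x => (nth 0 s i <= x)%R) s)%N.
Proof.
move=> ss hi.
apply: (@leq_trans (count (fun x => (nth 0 s i <= x)%R) (take i.+1 s))); last first.
  have := count_cat (fun x => (nth 0 s i <= x)%R) (take i.+1 s) (drop i.+1 s).
  by rewrite cat_take_drop => ->; apply: leq_addr.
have : all (fun x => (nth 0 s i <= x)%R) (take i.+1 s).
  apply/(all_nthP 0) => j; rewrite size_takel // => hj.
  rewrite nth_take //.
  apply: (sorted_leq_nth (leT := fun x y : R => y <= x));
    rewrite ?inE /= //; last by apply: (leq_trans hj).
  by move=> x y z /= h1 h2; apply: le_trans h2 h1.
by rewrite all_count size_takel // => /eqP ->.
Qed.

Section Final.
Variable R : realType.
Local Notation C := (R[i]).
Local Notation toC := (real_complex R).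
Local Open Scope sesquilinear_scope.

Lemma weyl n (A B : 'M[R]_n) : A^T = A -> B^T = B ->
  (forall x : 'rV[C]_n, (x *m cmx A *m x^t*) 0 0 <= (x *m cmx B *m x^t*) 0 0) ->
  forall i, (i < n)%N -> nth 0 (eigen_seq A) i <= nth 0 (eigen_seq B) i.
Proof.
move=> As Bs hq i hi.
have [PA [rA [PAu eA cA]]] := spec_real As.
have [PB [rB [PBu eB cB]]] := spec_real Bs.
have [sA pA] := eigen_seq_spec cA.
have [sB pB] := eigen_seq_spec cB.
have hm := @count_mono R n PA PB rA rB PAu PBu; rewrite -eA -eB in hm; have {}hm := hm hq.
set t := nth 0 (eigen_seq A) i.
apply: nth_count_ge => //.
have szA : size (eigen_seq A) = n by rewrite (perm_size pA) size_map size_enum_ord.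
have h1 := count_nth_ge sA (i := i); rewrite szA in h1; have {}h1 := h1 hi.
apply: (leq_trans h1).
rewrite (permP pA) (permP pB); move: (hm t); rewrite !card_count !count_map.
by [].
Qed.

Lemma qf_zero_diag n (M : 'M[R]_n) : (forall i, 0 <= M i i) ->
  forall x : 'rV[C]_n,
  (x *m cmx (zero_diag M) *m x^t*) 0 0 <= (x *m cmx M *m x^t*) 0 0.
Proof.
move=> hd x.
have e : cmx M = cmx (zero_diag M) + diag_mx (\row_j toC (M j j)).
  apply/matrixP => i j; rewrite !mxE.
  case: eqP => [->|]; first by rewrite mulr1n add0r.
  by rewrite mulr0n addr0.
rewrite e mulmxDr mulmxDl [X in _ <= X]mxE lerDl mul_mx_diag mxE.
apply: sumr_ge0 => j _; rewrite !mxE mulrAC.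
apply: mulr_ge0; first exact: mul_conjC_ge0.
by rewrite ler0c.
Qed.
End Final.

Unset Implicit Arguments.
Theorem lemma4p10 (R : realType) (n : nat) (M : 'M[R]_n) :
  (2 <= n)%N -> is_minimiser M -> is_minimiser (zero_diag M).
Proof.
move=> n2 [[Msym Mb] Mmin].
have Zs : in_Sn (zero_diag M).
  split => i j; rewrite !mxE.
    by rewrite eq_sym; case: eqP => // ->.
  by case: eqP => // _; rewrite lexx ler01.
split => // M' hM'.
apply: le_trans (Mmin M' hM').
rewrite /lambdak; apply: weyl.
- by apply/matrixP => i j; rewrite !mxE eq_sym; case: eqP => // ->.
- by apply/matrixP => i j; rewrite !mxE.
- by apply: qf_zero_diag => i; case/andP: (Mb i i).
- by case: n n2 {M Mmin Msym Mb Zs M' hM'} => [|[|n]].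
Qed.
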